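(* Let $G=(V,E)$ be a network with $n$ sources $s_1,\dots,s_n$ and two terminals $t_1,t_2$, such that for every $i\in\{1,\dots,n\}$ and $j\in\{1,2\}$ the max-flow from $s_i$ to $t_j$ is at least $1$. Then there exists a linear network code over $\mathbb{F}=GF(2^m)$ such that each terminal $t_j$ can recover $\sum_{i=1}^n X_i$ from the symbols on its incoming edges.
   Context: A network is a finite directed acyclic graph $G=(V,E)$ (parallel edges allowed) in which every edge has unit capacity and carries one symbol of a finite field $\mathbb{F}$ per use. Sources are vertices with no incoming edges; source $s_i$ holds $X_i\in\mathbb{F}$, the $X_i$ independent and uniformly distributed (unit entropy). Terminals are vertices with no outgoing edges. In a linear network code the symbol on an edge leaving a non-source vertex is an $\mathbb{F}$-linear combination of the symbols on the edges entering its tail, and the symbol on an edge leaving a source is a multiple of the source symbol. *)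

(* Defs.v *)
From HB Require Import structures.
From mathcomp Require Import all_boot all_order all_algebra all_field.
Set Implicit Arguments. Unset Strict Implicit. Unset Printing Implicit Defensive.
Import Order.TTheory GRing.Theory Num.Theory.
Local Open Scope ring_scope.

Section Network.
Variables (V E : finType) (tail head : E -> V).

Definition adj : rel V := fun u v => [exists e, (tail e == u) && (head e == v)].

Definition acyclic : Prop := forall e : E, ~~ connect adj (head e) (tail e).

Definition is_source (v : V) : bool := [forall e, head e != v].
Definition is_terminal (v : V) : bool := [forall e, tail e != v].

Definition is_flow (f : E -> rat) (s t : V) : Prop :=
  (forall e, 0 <= f e <= 1) /\
  (forall v, v != s -> v != t ->
     \sum_(e | head e == v) f e = \sum_(e | tail e == v) f e).

Definition flow_value (f : E -> rat) (s : V) : rat :=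
  \sum_(e | tail e == s) f e - \sum_(e | head e == s) f e.

Definition maxflow_ge1 (s t : V) : Prop :=
  exists f : E -> rat, is_flow f s t /\ 1 <= flow_value f s.

(* A linear network code over F for sources s : 'I_n -> V:
   [srcc e] is the coefficient used on an edge leaving a source,
   [loc e' e] is the local coefficient of incoming edge e' on edge e. *)
Record lin_code (F : fieldType) := LinCode {
  srcc : E -> F;
  loc : E -> E -> F
}.

Definition edge_symbols (F : fieldType) (n : nat) (s : 'I_n -> V)
    (c : lin_code F) (X : 'I_n -> F) (y : E -> F) : Prop :=
  forall e : E,
    (forall i, tail e = s i -> y e = srcc c e * X i) /\
    ((forall i, tail e != s i) ->
       y e = \sum_(e' | head e' == tail e) loc c e' e * y e').

Definition incoming (F : fieldType) (t : V) (y : E -> F) : {ffun E -> F} :=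
  [ffun e => if head e == t then y e else 0].

Definition recovers_sum (F : fieldType) (n : nat) (s : 'I_n -> V)
    (c : lin_code F) (t : V) : Prop :=
  exists dec : {ffun E -> F} -> F,
    forall (X : 'I_n -> F) (y : E -> F),
      edge_symbols s c X y -> dec (incoming t y) = \sum_(i < n) X i.

End Network.

(* Main.v *)
Require Import Defs.
From HB Require Import structures.
From mathcomp Require Import all_boot all_order all_algebra all_field.
Import Order.TTheory GRing.Theory Num.Theory.
Local Open Scope ring_scope.

Lemma sum_part (R : zmodType) (I J : finType) (p : I -> J) (P : pred J) (F : I -> R) :
  \sum_(j | P j) \sum_(i | p i == j) F i = \sum_(i | P (p i)) F i.
Proof.
rewrite (partition_big p P) //=. apply: eq_bigr => j Pj. apply: eq_bigl => i.
by case: (p i =P j) => [->|]; rewrite ?andbT ?andbF ?Pj.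
Qed.

Lemma sum_partT (R : zmodType) (I J : finType) (p : I -> J) (F : I -> R) :
  \sum_j \sum_(i | p i == j) F i = \sum_i F i.
Proof. by rewrite -(@sum_part R I J p predT F). Qed.

Lemma sum_opt (E : finType) (F : fieldType) (o : option E) (P : pred E) (g : E -> F) :
  (forall e, o = Some e -> P e) ->
  \sum_(e | P e) (o == Some e)%:R * g e = if o is Some e0 then g e0 else 0.
Proof.
case: o => [e0|] He.
  rewrite (bigD1 e0) ?He //= eqxx mul1r big1 ?addr0 // => e /andP[_ ne].
  by rewrite (inj_eq (@Some_inj _)) eq_sym (negbTE ne) mul0r.
by rewrite big1 // => e _; rewrite mul0r.
Qed.

Lemma flow_connect (V E : finType) (tail head : E -> V) s t :
  maxflow_ge1 tail head s t -> connect (adj tail head) s t.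
Proof.
case=> f [[f01 cons] val1]. apply/idPn => nst.
pose R := fun v => connect (adj tail head) s v.
have closed : forall e, R (tail e) -> R (head e).
  move=> e H; apply: connect_trans H (connect1 _).
  by apply/existsP; exists e; rewrite !eqxx.
have h1 : \sum_(e | R (tail e)) f e <= \sum_(e | R (head e)) f e.
  rewrite [X in X <= _]big_mkcond [X in _ <= X]big_mkcond /=; apply: ler_sum => e _.
  case Ht: (R (tail e)); first by rewrite (closed e Ht).
  by case: (R (head e)) => //; case/andP: (f01 e).
have h2 : \sum_(v | R v) (\sum_(e | head e == v) f e - \sum_(e | tail e == v) f e)
    = - flow_value tail head f s.
  rewrite (bigD1 s) /=; last exact: connect0.
  rewrite [X in _ + X]big1 ?addr0 /flow_value ?opprB //.
  move=> v /andP [Rv nvs]. rewrite (cons v nvs) ?subrr //.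
  by apply: contraNneq nst => <-.
rewrite sumrB !sum_part in h2.
have : 0 <= - flow_value tail head f s by rewrite -h2 subr_ge0.
rewrite oppr_ge0 => h3.
by have := le_trans val1 h3.
Qed.

Lemma flow_out (V E : finType) (tail head : E -> V) s t :
  maxflow_ge1 tail head s t -> exists e, tail e == s.
Proof.
case=> f [[f01 cons] val1].
case: (boolP [exists e, tail e == s]) => [/existsP //|]; rewrite negb_exists => /forallP H; exfalso.
move: val1; rewrite /flow_value big_pred0; last by move=> e; exact/negbTE/H.
rewrite sub0r; apply/negP; rewrite -ltNge.
apply: (le_lt_trans _ ltr01). rewrite oppr_le0. apply: sumr_ge0 => e _.
by case/andP: (f01 e).
Qed.

Lemma comb (V E : finType) (tail head : E -> V) (F : fieldType) (ra rb : V -> bool) (ta : V)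
  (oA o1 o2 : V -> option E) (w : E -> F)
  (hA : forall v, pick_spec (fun e => (tail e == v) && ra (head e) && rb (head e)) (oA v))
  (h1 : forall v, pick_spec (fun e => (tail e == v) && ra (head e) && ~~ rb (head e)) (o1 v))
  (h2 : forall v, pick_spec (fun e => (tail e == v) && rb (head e) && ~~ ra (head e)) (o2 v))
  (hw : forall e, w e = if oA (tail e) is Some _ then (oA (tail e) == Some e)%:R
                        else (o1 (tail e) == Some e)%:R + (o2 (tail e) == Some e)%:R)
  (stepa : forall e, ra (head e) -> ra (tail e))
  (exa : forall v, ra v -> v != ta -> exists e, (tail e == v) && ra (head e)) :
  forall v, v != ta -> (ra v)%:R = \sum_(e | tail e == v) w e * (ra (head e))%:R :> F.
Proof.
move=> v nv.
rewrite (eq_bigr (fun e => (if oA v is Some _ then (oA v == Some e)%:R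
     else (o1 v == Some e)%:R + (o2 v == Some e)%:R) * (ra (head e))%:R)); last first.
  by move=> e /eqP te; rewrite hw te.
case: (hA v) => [e0 /andP[/andP[/eqP te0 ha] hb] | nA].
  rewrite (@sum_opt E F (Some e0)); first by rewrite ha -te0 stepa.
  by move=> e [<-]; rewrite te0.
rewrite (eq_bigr (fun e => (o1 v == Some e)%:R * (ra (head e))%:R
     + (o2 v == Some e)%:R * (ra (head e))%:R)); last by move=> e _; rewrite mulrDl.
rewrite big_split /=.
rewrite (@sum_opt E F (o1 v)); last first.
  by move=> e eq; case: (h1 v) eq => // e1 /andP[/andP[]] + _ _ [<-].
rewrite (@sum_opt E F (o2 v)); last first.
  by move=> e eq; case: (h2 v) eq => // e1 /andP[/andP[]] + _ _ [<-].
have -> : (if o2 v is Some e0 then (ra (head e0))%:R else 0) = 0 :> F.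
  by case: (h2 v) => // e2 /andP[_ /negbTE ->].
rewrite addr0.
case: (h1 v) => [e1 /andP[/andP[/eqP te1 ha] _] | n1].
  by rewrite ha -te1 stepa.
case rv: (ra v) => //.
have [e /andP[te he]] := exa v rv nv.
case rbe: (rb (head e)).
  by move: (nA e); rewrite te he rbe.
by move: (n1 e); rewrite te he rbe.
Qed.

Lemma key (V E : finType) (tail head : E -> V) (n : nat) (s : 'I_n -> V) (F : fieldType)
  (w : E -> F) (phi : V -> F) (t : V)
  (s_inj : injective s)
  (hP : forall v, v != t -> phi v = \sum_(e | tail e == v) w e * phi (head e))
  (ht : phi t = 1) (hterm : forall e, tail e != t)
  (hsrc : forall i e, head e != s i) (hs1 : forall i, phi (s i) = 1) (hst : forall i, s i != t)
  (X : 'I_n -> F) (y : E -> F) :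
  edge_symbols tail head s (LinCode (fun _ : E => 1) (fun e' _ : E => w e')) X y ->
  \sum_(e | head e == t) w e * y e = \sum_(i < n) X i.
Proof.
move=> hy.
pose inn v := \sum_(e | head e == v) w e * y e.
pose S := \sum_e w e * y e * phi (head e).
have S1 : S = \sum_v phi v * inn v.
  rewrite /S -(@sum_partT F E V head). apply: eq_bigr => v _.
  rewrite /inn mulr_sumr. apply: eq_bigr => e /eqP ->. by rewrite mulrC.
have S2 : S = \sum_v \sum_(e | tail e == v) w e * y e * phi (head e).
  by rewrite /S -(@sum_partT F E V tail).
have D : forall v, phi v * inn v - \sum_(e | tail e == v) w e * y e * phi (head e)
    = (v == t)%:R * inn t - \sum_(i | s i == v) X i.
  move=> v.
  case: (pickP (fun i => s i == v)) => [i /eqP <- | ns].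
    have -> : inn (s i) = 0.
      by rewrite /inn big_pred0 // => e; apply/negbTE/hsrc.
    rewrite (negbTE (hst i)) !mul0r mulr0 (big_pred1 i); last first.
      by move=> j; rewrite /= (inj_eq s_inj).
    rewrite (eq_bigr (fun e => X i * (w e * phi (head e)))); last first.
      move=> e /eqP te. rewrite ((hy e).1 i te) /= mul1r.
      by rewrite mulrAC mulrC.
    by rewrite -mulr_sumr -hP // hs1 mulr1.
  rewrite (big_pred0 _ _ _ _ ns) subr0.
  rewrite (eq_bigr (fun e => inn v * (w e * phi (head e)))); last first.
    move=> e /eqP te. rewrite ((hy e).2); last first.
      by move=> i; rewrite te eq_sym ns.
    by rewrite /= te mulrAC mulrC.
  rewrite -mulr_sumr.
  case: (eqVneq v t) => [-> | nvt].
    rewrite big_pred0 ?mulr0 ?subr0 ?ht ?mul1r // => e; exact/negbTE/hterm.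
  by rewrite -hP // mul0r mulrC subrr.
have : \sum_v (phi v * inn v - \sum_(e | tail e == v) w e * y e * phi (head e)) = 0.
  by rewrite sumrB -S1 -S2 subrr.
rewrite (eq_bigr _ (fun v _ => D v)) sumrB (@sum_partT F 'I_n V s).
rewrite (bigD1 t) //= eqxx mul1r big1 ?addr0; last first.
  by move=> v /negbTE ->; rewrite mul0r.
by move/eqP; rewrite subr_eq0 => /eqP.
Qed.

Lemma pick_spec_ext (T : finType) (P Q : pred T) o : P =1 Q -> pick_spec P o -> pick_spec Q o.
Proof.
move=> PQ [x Px|P0]; first by constructor; rewrite -PQ.
by constructor 2 => x; rewrite -PQ P0.
Qed.

Lemma reach_step (V E : finType) (tail head : E -> V) t v :
  connect (adj tail head) v t -> v != t ->
  exists e, (tail e == v) && connect (adj tail head) (head e) t.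
Proof.
case/connectP => [[|x p]] /=; first by move=> _ -> ; rewrite eqxx.
case/andP => /existsP [e /andP[te he]] pth lst _.
exists e; rewrite te /= (eqP he); apply/connectP; by exists p.
Qed.

Lemma reach_back (V E : finType) (tail head : E -> V) t e :
  connect (adj tail head) (head e) t -> connect (adj tail head) (tail e) t.
Proof.
move=> H; apply: connect_trans H; apply: connect1.
by apply/existsP; exists e; rewrite !eqxx.
Qed.

Theorem theorem2
  (V E : finType) (tail head : E -> V)
  (acyc : acyclic tail head)
  (n : nat) (s : 'I_n -> V) (t1 t2 : V)
  (s_inj : injective s)
  (s_src : forall v, is_source head v <-> exists i, v = s i)
  (t_term : forall v, is_terminal tail v <-> (v = t1 \/ v = t2))
  (t12 : t1 != t2)
  (conn : forall i, maxflow_ge1 tail head (s i) t1 /\ maxflow_ge1 tail head (s i) t2)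
  (F : finFieldType) (m : nat) (hF : #|F| = (2 ^ m)%N) :
  exists c : lin_code E F,
    recovers_sum tail head s c t1 /\ recovers_sum tail head s c t2.
Proof.
pose r1 v := connect (adj tail head) v t1.
pose r2 v := connect (adj tail head) v t2.
pose oA v := [pick e | (tail e == v) && r1 (head e) && r2 (head e)].
pose o1 v := [pick e | (tail e == v) && r1 (head e) && ~~ r2 (head e)].
pose o2 v := [pick e | (tail e == v) && r2 (head e) && ~~ r1 (head e)].
pose w (e : E) : F := if oA (tail e) is Some _ then (oA (tail e) == Some e)%:R
                        else (o1 (tail e) == Some e)%:R + (o2 (tail e) == Some e)%:R.
have hsrc : forall i e, head e != s i.
  move=> i e; have := (s_src (s i)).2 (ex_intro _ i erefl).
  by move/forallP.
have hterm : forall t, (t = t1 \/ t = t2) -> forall e, tail e != t.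
  by move=> t ht e; move: ((t_term t).2 ht) => /forallP.
have hout : forall j i, maxflow_ge1 tail head (s i) j -> (j = t1 \/ j = t2) -> s i != j.
  move=> j i /flow_out [e te] hj; apply/eqP => sij.
  by move: (hterm j hj e); rewrite -sij te.
have dec_ok : forall (t : V) (phi : V -> F), (t = t1 \/ t = t2) ->
   (forall v, v != t -> phi v = \sum_(e | tail e == v) w e * phi (head e)) ->
   phi t = 1 -> (forall i, phi (s i) = 1) -> (forall i, s i != t) ->
   recovers_sum tail head s (LinCode (fun _ : E => 1) (fun e' _ : E => w e')) t.
  move=> t phi ht hP phit hs1 hst.
  exists (fun g : {ffun E -> F} => \sum_e w e * g e) => X y hy.
  rewrite -(@key V E tail head n s F w phi t s_inj hP phit (hterm t ht) hsrc hs1 hst X y hy).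
  rewrite [RHS]big_mkcond; apply: eq_bigr => e _.
  by rewrite /incoming ffunE; case: ifP; rewrite ?mulr0.
exists (LinCode (fun _ : E => 1) (fun e' _ : E => w e')); split.
  apply: (dec_ok t1 (fun v => (r1 v)%:R)); first by left.
  - apply: (@comb V E tail head F r1 r2 t1 oA o1 o2 w).
    + move=> v; exact: pickP.
    + move=> v; exact: pickP.
    + move=> v; exact: pickP.
    + by [].
    + move=> e; exact: reach_back.
    + move=> v; exact: reach_step.
  - by rewrite /r1 connect0.
  - by move=> i; rewrite /r1 (@flow_connect V E tail head _ _ (conn i).1).
  - move=> i; apply: hout; [exact: (conn i).1 | by left].
apply: (dec_ok t2 (fun v => (r2 v)%:R)); first by right.
- apply: (@comb V E tail head F r2 r1 t2 oA o2 o1 w).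
  + move=> v; apply: pick_spec_ext (pickP _) => e; by rewrite -andbA [r1 _ && _]andbC andbA.
  + move=> v; exact: pickP.
  + move=> v; exact: pickP.
  + by move=> e; rewrite /w; case: (oA (tail e)) => //; rewrite addrC.
  + move=> e; exact: reach_back.
  + move=> v; exact: reach_step.
- by rewrite /r2 connect0.
- by move=> i; rewrite /r2 (@flow_connect V E tail head _ _ (conn i).2).
- move=> i; apply: hout; [exact: (conn i).2 | by right].
Qed.
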